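(* Let $\Gamma$ be a finite alphabet totally ordered via a valuation $v:\Gamma\to\mathbb{Z}$, and let $M_\Gamma$ be the set of $m$-words over $\Gamma$. Let $p,r\in\Gamma$ be arbitrary symbols and let $w_1,w_2$ be words over $\Gamma$ (one of which may be empty) such that $w=w_1\cdot p\cdot r\cdot p\cdot w_2\in M_\Gamma$. Then \[ w_1\cdot p\cdot r\cdot p\cdot w_2 \;=_{zip}\; w_1\cdot p\cdot w_2 . \]
   Context: $\Gamma$ is a finite set of symbols with a valuation $v:\Gamma\to\mathbb{Z}$ inducing a total order ($a<_\Gamma b$ iff $v(a)<v(b)$). An $m$-word is a word over $\Gamma$ of even (positive) length; $M_\Gamma$ is the set of all $m$-words, closed under concatenation $\cdot$. For $r,s\in\Gamma$ the distance is $\delta(r,s)=|v(r)-v(s)|$. The $\lambda$-length of an $m$-word $a_1a_2\cdots a_{2n}$ is the alternating sum $\lambda(a_1\cdots a_{2n})=-\delta(a_1,a_2)+\delta(a_2,a_3)-\delta(a_3,a_4)+\cdots-\delta(a_{2n-1},a_{2n})$. The compression relation $=_{zip}$ on $M_\Gamma$ is the equivalence relation obtained from the elementary rule: for all $p,r,s,t\in\Gamma$, $p\cdot r\cdot s\cdot t=_{zip}p\cdot t$ whenever $\lambda(p\cdot r\cdot s\cdot t)=\lambda(p\cdot t)$, applied iteratively to subwords and required to be preserved under concatenation: for all $w_1,w_2,w_3,w_4\in M_\Gamma$, if $w_1=_{zip}w_2$ and $w_3=_{zip}w_4$ then $w_1w_3=_{zip}w_2w_4$. *)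

(* Defs.v *)
From mathcomp Require Import all_boot all_order all_algebra.
Set Implicit Arguments. Unset Strict Implicit. Unset Printing Implicit Defensive.
Import Order.TTheory GRing.Theory Num.Theory.
Local Open Scope ring_scope.

Section Zip.
Variables (G : finType) (v : G -> int).

Definition delta (r s : G) : int := `|v r - v s|.

Definition mword (w : seq G) : bool := (0 < size w)%N && ~~ odd (size w).

Fixpoint lam_aux (sgn : bool) (a : G) (s : seq G) : int :=
  match s with
  | [::] => 0
  | b :: s' => (if sgn then delta a b else - delta a b) + lam_aux (~~ sgn) b s'
  end.

(* lambda(a1...a2n) = -d(a1,a2) + d(a2,a3) - ... - d(a_{2n-1},a_{2n}) *)
Definition lam (w : seq G) : int :=
  match w with [::] => 0 | a :: s => lam_aux false a s end.

Inductive zip_rel : seq G -> seq G -> Prop :=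
| zip_elem p r s t : lam [:: p; r; s; t] = lam [:: p; t] ->
    zip_rel [:: p; r; s; t] [:: p; t]
| zip_refl w : mword w -> zip_rel w w
| zip_sym w1 w2 : zip_rel w1 w2 -> zip_rel w2 w1
| zip_trans w1 w2 w3 : zip_rel w1 w2 -> zip_rel w2 w3 -> zip_rel w1 w3
| zip_cat w1 w2 w3 w4 : zip_rel w1 w2 -> zip_rel w3 w4 -> zip_rel (w1 ++ w3) (w2 ++ w4).

End Zip.

(* Main.v *)
Require Import Defs.
From mathcomp Require Import all_boot all_order all_algebra.
From mathcomp Require Import zify.
Import Order.TTheory GRing.Theory Num.Theory.

Lemma catL {G : finType} (v : G -> int) c a b :
  ~~ odd (size c) -> zip_rel v a b -> zip_rel v (c ++ a) (c ++ b).
Proof.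
case: c => [|x c] Hc H; first exact: H.
by apply: Defs.zip_cat => //; apply: zip_refl; rewrite /mword Hc.
Qed.

Lemma catR {G : finType} (v : G -> int) c a b :
  ~~ odd (size c) -> zip_rel v a b -> zip_rel v (a ++ c) (b ++ c).
Proof.
case: c => [|x c] Hc H; first by rewrite !cats0.
by apply: Defs.zip_cat => //; apply: zip_refl; rewrite /mword Hc.
Qed.

Lemma dsym {G : finType} (v : G -> int) a b : delta v a b = delta v b a.
Proof. by rewrite /delta distrC. Qed.

Theorem proposition1 (G : finType) (v : G -> int) (hv : injective v)
    (p r : G) (w1 w2 : seq G) :
  mword (w1 ++ [:: p, r, p & w2]) ->
  @zip_rel G v (w1 ++ [:: p, r, p & w2]) (w1 ++ p :: w2).
Proof.
rewrite /mword size_cat /= => /andP[_ Hev].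
case: (boolP (odd (size w1))) => Ho.
- case/lastP: w1 Ho Hev => [|w1 q] //; rewrite size_rcons /= => Ho Hev.
  rewrite -!cats1 -!catA /=.
  have -> : [:: q, p, r, p & w2] = [:: q; p; r; p] ++ w2 by [].
  have -> : [:: q, p & w2] = [:: q; p] ++ w2 by [].
  apply: catL => //; apply: catR.
    by move: Hev Ho; rewrite !oddD /=; do 2 case: odd.
  apply: zip_elem; rewrite /lam /= (dsym v r p). 
  lia.
- case: w2 Hev => [|t w2] Hev.
    by move: Hev Ho; rewrite !oddD /=; case: odd.
  have -> : [:: p, r, p, t & w2] = [:: p; r; p; t] ++ w2 by [].
  have -> : [:: p, t & w2] = [:: p; t] ++ w2 by [].
  apply: catL => //; apply: catR.
    by move: Hev Ho; rewrite !oddD /=; do 2 case: odd.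
  apply: zip_elem; rewrite /lam /= (dsym v r p).
  lia.
Qed.
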